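(* Let $G = (V, E, b, c)$ be a weighted hypergraph whose edges $e_0, e_1, \dots$ are processed by procedure COVER, and let $r$ be any integer. Then for every time $t$, \[ b\left( \{ v \in e_t \mid \mathrm{eff}_{t+1}(v) \leq r \} \right) < 2^{r+1} \cdot c(e_t). \]
   Context: A weighted hypergraph $G = (V, E, b, c)$ has vertex set $V$, a multiset $E$ of non-empty edges $e \subseteq V$, benefits $b : V \to \mathbb{Q}_{>0}$ and costs $c : E \to \mathbb{Q}_{>0}$; $b(U) = \sum_{v \in U} b(v)$. Edges arrive in a stream $e_0, e_1, \dots$, and $\mathrm{id}(e)$ is an identifier of edge $e$. Procedure COVER maintains for each $v \in V$ a variable $\mathrm{eid}(v)$ (initially NULL) and an integer variable $\mathrm{eff}(v)$ (initially $-\infty$); $\mathrm{eff}_t(v)$ denotes the value of $\mathrm{eff}(v)$ just before $e_t$ is processed. For $T \subseteq e_t$ the level is $\mathrm{lev}_t(T) = \lceil \lg (b(T)/c(e_t)) \rceil$ ($\lg$ = base-2 logarithm), and $T$ is effective at time $t$ if $\mathrm{lev}_t(T) > \mathrm{eff}_t(v)$ for every $v \in T$ (the empty set is vacuously effective). When $e_t$ arrives, COVER computes an effective subset $T \subseteq e_t$ of largest benefit $b(T)$ (any such subset) and, for every $v \in T$, sets $\mathrm{eid}(v) \leftarrow \mathrm{id}(e_t)$ and $\mathrm{eff}(v) \leftarrow \mathrm{lev}_t(T)$. *)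

(* Defs.v *)
From mathcomp Require Import all_boot all_order all_algebra.
From Stdlib Require Import ClassicalEpsilon.
Set Implicit Arguments. Unset Strict Implicit. Unset Printing Implicit Defensive.
Import Order.TTheory GRing.Theory Num.Theory.
Local Open Scope ring_scope.

Definition is_ceil_lg (x : rat) (k : int) : Prop :=
  (2%:Q ^ (k - 1) < x) /\ (x <= 2%:Q ^ k).

(* ceil(lg x) for x > 0 (unique such k exists); arbitrary otherwise. *)
Definition ceil_lg (x : rat) : int :=
  epsilon (inhabits 0%:Z) (is_ceil_lg x).

Definition bsum (V : finType) (b : V -> rat) (U : {set V}) : rat :=
  \sum_(v in U) b v.

(* eff values: None stands for -oo *)
Definition lt_eff (m : option int) (k : int) : bool :=
  if m is Some m' then m' < k else true.
Definition le_eff (m : option int) (k : int) : bool :=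
  if m is Some m' then m' <= k else true.

Section Cover.
Variables (V : finType) (b : V -> rat) (e : nat -> {set V}) (c : nat -> rat).

Definition lev (t : nat) (T : {set V}) : int := ceil_lg (bsum b T / c t).

Definition effective (effs : V -> option int) (t : nat) (T : {set V}) : Prop :=
  forall v, v \in T -> lt_eff (effs v) (lev t T).

(* A run of COVER: eff t = values of eff just before e_t is processed,
   eid t = values of eid just before e_t is processed (id(e_t) := t),
   T t = the effective subset chosen when e_t arrives. *)
Definition COVER_run (eff : nat -> V -> option int) (eid : nat -> V -> option nat)
    (T : nat -> {set V}) : Prop :=
  (forall v, eff 0%N v = None) /\ (forall v, eid 0%N v = None) /\
  (forall t, [/\ T t \subset e t, effective (eff t) t (T t) &
     forall T' : {set V}, T' \subset e t -> effective (eff t) t T' ->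
       bsum b T' <= bsum b (T t)]) /\
  (forall t v, eff t.+1 v = if v \in T t then Some (lev t (T t)) else eff t v) /\
  (forall t v, eid t.+1 v = if v \in T t then Some t else eid t v).
End Cover.

(* Main.v *)
Require Import Defs.
From mathcomp Require Import all_boot all_order all_algebra.
From mathcomp Require Import zify.
From Stdlib Require Import ClassicalEpsilon.
Import Order.TTheory GRing.Theory Num.Theory.
Local Open Scope ring_scope.

Lemma ceil_lg_ex (x : rat) : 0 < x -> exists k, is_ceil_lg x k.
Proof.
move=> x0.
set N := Num.Def.archi_bound x^-1.
have hN : x^-1 < 2 ^+ N by apply: upper_nthrootP.
set n := Num.Def.archi_bound x.
have hn : x < 2 ^+ n by apply: upper_nthrootP.
pose P m := x <= 2%:Q ^ (m%:Z - N%:Z).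
have exP : exists m, P m.
  exists (n + N)%N; rewrite /P PoszD addrK; exact: ltW.
case: (ex_minnP exP) => m Pm minm.
have hlow : ~~ P 0%N.
  rewrite /P -ltNge sub0r -invr_expz.
  by rewrite -(invrK x) ltf_pV2 ?posrE ?invr_gt0 ?exprz_gt0.
case: m Pm minm => [|m] Pm minm; first by rewrite Pm in hlow.
exists (m.+1%:Z - N%:Z); split => //.
have : ~~ P m by apply/negP => /minm; rewrite ltnn.
rewrite /P -ltNge.
have -> : (m.+1%:Z - N%:Z - 1) = m%:Z - N%:Z by lia.
by [].
Qed.

Lemma ceil_lg_spec (x : rat) : 0 < x -> is_ceil_lg x (ceil_lg x).
Proof.
move=> /ceil_lg_ex [k hk]; rewrite /ceil_lg.
by apply: epsilon_spec; exists k.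
Qed.

Lemma two_gt1 : 1 < 2%:Q. Proof. by []. Qed.

Lemma ceil_lg_ge (x : rat) (r : int) : 2%:Q ^ r <= x -> r <= ceil_lg x.
Proof.
move=> h.
have x0 : 0 < x by apply: lt_le_trans h; apply: exprz_gt0.
have [_ hu] := ceil_lg_spec _ x0.
rewrite -(ler_eXz2l two_gt1); exact: le_trans hu.
Qed.

Lemma ceil_lg_mono (x y : rat) : 0 < x -> x <= y -> ceil_lg x <= ceil_lg y.
Proof.
move=> x0 xy.
have y0 : 0 < y by apply: lt_le_trans xy.
have [hx _] := ceil_lg_spec _ x0.
have [_ hy] := ceil_lg_spec _ y0.
have : 2%:Q ^ (ceil_lg x - 1) < 2 ^ ceil_lg y by apply: (lt_le_trans _ hy); apply: (lt_le_trans hx xy).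
rewrite (ltr_eXz2l two_gt1); lia.
Qed.

Section B.
Variables (V : finType) (b : V -> rat) (hb : forall v, 0 < b v).

Lemma bsum_ge0 (A : {set V}) : 0 <= bsum b A.
Proof. by apply: sumr_ge0 => i _; apply: ltW. Qed.

Lemma bsum_gt0 (A : {set V}) v : v \in A -> 0 < bsum b A.
Proof.
move=> vA; rewrite /bsum (bigD1 v) //=.
apply: (lt_le_trans (hb v)); rewrite lerDl; apply: sumr_ge0 => i _; apply: ltW; apply: hb.
Qed.

Lemma bsum_sub (A B : {set V}) : A \subset B -> bsum b A <= bsum b B.
Proof.
move=> AB; rewrite /bsum [X in _ <= X](big_setID A) /=.
have -> : B :&: A = A by apply/setIidPr.
by rewrite lerDl; apply: sumr_ge0 => i _; apply: ltW; apply: hb.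
Qed.

Lemma bsumU (A B : {set V}) : [disjoint A & B] -> bsum b (A :|: B) = bsum b A + bsum b B.
Proof. by move=> d; rewrite /bsum (eq_bigl [predU A & B]) ?bigU // => i; rewrite !inE. Qed.
End B.

Lemma lt_eff_mono m k k' : lt_eff m k -> k <= k' -> lt_eff m k'.
Proof. by case: m => //= m h1 h2; apply: lt_le_trans h2. Qed.

Lemma le_lt_eff m r k : le_eff m r -> r < k -> lt_eff m k.
Proof. by case: m => //= m h1 h2; apply: le_lt_trans h2. Qed.

Theorem lemma7 (V : finType) (b : V -> rat) (e : nat -> {set V}) (c : nat -> rat)
    (hb : forall v, 0 < b v) (he : forall t, e t != set0) (hc : forall t, 0 < c t)
    (eff : nat -> V -> option int) (eid : nat -> V -> option nat) (T : nat -> {set V})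
    (hrun : COVER_run b e c eff eid T) (r : int) (t : nat) :
  bsum b [set v in e t | le_eff (eff t.+1 v) r] < 2%:Q ^ (r + 1) * c t.
Proof.
case: hrun => _ [_ [hT [heff _]]].
have [hsub heffT hmax] := hT t.
set S := [set v in e t | le_eff (eff t.+1 v) r].
rewrite ltNge; apply/negP => hS.
have ct := hc t.
have big_lev : forall U : {set V}, 2%:Q ^ (r + 1) * c t <= bsum b U -> r + 1 <= lev b c t U.
  move=> U hU; rewrite /lev; apply: ceil_lg_ge.
  by rewrite ler_pdivlMr.
set U := S :|: T t.
have SU : bsum b S <= bsum b U by apply: bsum_sub => //; apply: subsetUl.
have TU : bsum b (T t) <= bsum b U by apply: bsum_sub => //; apply: subsetUr.
have levU : r + 1 <= lev b c t U by apply: big_lev; apply: le_trans SU.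
have effU : effective b c (eff t) t U.
  move=> w; rewrite in_setU; case: (boolP (w \in T t)) => wT.
    move=> _; apply: lt_eff_mono (heffT w wT) _.
    rewrite /lev; apply: ceil_lg_mono.
      by apply: divr_gt0 => //; apply: bsum_gt0 wT.
    by rewrite ler_pM2r ?invr_gt0.
  rewrite orbF => wS.
  move: wS; rewrite inE => /andP [_]; rewrite heff (negbTE wT) => hw.
  apply: le_lt_eff hw _; apply: lt_le_trans levU; rewrite ltrDl //.
have hUT : bsum b U <= bsum b (T t).
  apply: hmax => //; rewrite subUset hsub andbT.
  by apply/subsetP => w; rewrite inE => /andP [].
have levT : r + 1 <= lev b c t (T t).
  by apply: big_lev; apply: le_trans hUT; apply: le_trans SU.
have dis : [disjoint S & T t].
  apply/pred0P => w /=; apply/negP => /andP [wS wT].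
  move: wS; rewrite inE => /andP [_]; rewrite heff wT /= => h.
  by have := le_trans levT h; rewrite gerDl.
move: hUT; rewrite /U bsumU // gerDr => hS0.
have : 0 < 2%:Q ^ (r + 1) * c t by apply: mulr_gt0 => //; apply: exprz_gt0.
by rewrite ltNge (le_trans hS (le_trans hS0 _)).
Qed.
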